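(* Let $E:\mathbb R^N\to\mathbb R$ be a function which is analytic at a local minimum $\mathbf p$, and let $j,k\ge1$ be integers. Suppose there exists a $(j,2k)$ $E$-flex $\mathbf p(t)$ at $\mathbf p$. Then $E$ grows sometimes-$s$-slowly at $\mathbf p$, where $s=\frac{2k+2}{j}$.
   Context: A trajectory at $\mathbf p$ is an analytic non-constant map $t\mapsto\mathbf p(t)\in\mathbb R^N$, defined for $t\in[0,\varepsilon]$ for some $\varepsilon>0$, with $\mathbf p(0)=\mathbf p$. A $C^k$ function $\varphi(t)$ is $k$-vanishing if $\varphi^{(i)}(0)=0$ for $1\le i\le k$, and $k$-active if $(k-1)$-vanishing but not $k$-vanishing. A $(j,k)$ $E$-flex at $\mathbf p$ is a $j$-active trajectory $\mathbf p(t)$ at $\mathbf p$ such that $E(\mathbf p(t))$ is $k$-vanishing. $E$ grows sometimes-$s$-slowly at $\mathbf p$ if there exist a trajectory $\mathbf q(t)$ at $\mathbf p$ and constants $c_2,\delta>0$ such that $E(\mathbf q(t))-E(\mathbf p)\le c_2|\mathbf q(t)-\mathbf p|^s$ for $t\in[0,\delta]$. *)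

(* Defs.v *)
From HB Require Import structures.
From mathcomp Require Import all_boot all_order all_algebra.
From mathcomp Require Import all_classical all_reals all_analysis.
Set Implicit Arguments. Unset Strict Implicit. Unset Printing Implicit Defensive.
Import Order.TTheory GRing.Theory Num.Theory.
Import numFieldNormedType.Exports.
Local Open Scope classical_set_scope.
Local Open Scope ring_scope.

Definition enorm (R : realType) (N : nat) (x : 'rV[R]_N) : R :=
  Num.sqrt (\sum_(i < N) x ord0 i ^+ 2).

Definition monom (R : realType) (N : nat) (alpha : 'I_N -> nat) (h : 'rV[R]_N) : R :=
  \prod_(i < N) h ord0 i ^+ alpha i.

(* Homogeneous part of total degree n of the power series with coefficients c,
   evaluated at h (finite sum over multi-indices of total degree n). *)
Definition hom_part (R : realType) (N : nat) (c : ('I_N -> nat) -> R)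
    (h : 'rV[R]_N) (n : nat) : R :=
  \sum_(a : {ffun 'I_N -> 'I_n.+1} | (\sum_(i < N) (a i : nat))%N == n)
     c (fun i => (a i : nat)) * monom (fun i => (a i : nat)) h.

Definition abs_hom_part (R : realType) (N : nat) (c : ('I_N -> nat) -> R)
    (h : 'rV[R]_N) (n : nat) : R :=
  \sum_(a : {ffun 'I_N -> 'I_n.+1} | (\sum_(i < N) (a i : nat))%N == n)
     `|c (fun i => (a i : nat))| * `|monom (fun i => (a i : nat)) h|.

(* E : R^N -> R is (real) analytic at p: on a neighbourhood of p it equals an
   absolutely convergent power series centred at p. *)
Definition analytic_at (R : realType) (N : nat) (E : 'rV[R]_N -> R) (p : 'rV[R]_N) :=
  exists (r : R) (c : ('I_N -> nat) -> R), 0 < r /\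
    forall h : 'rV[R]_N, enorm h < r ->
      (exists l : R, series (abs_hom_part c h) @ \oo --> l) /\
      series (hom_part c h) @ \oo --> E (p + h).

Definition analytic1_at (R : realType) (f : R -> R) (t0 : R) :=
  exists (r : R) (a : nat -> R), 0 < r /\
    forall h : R, `|h| < r ->
      (exists l : R, series (fun n => `|a n| * `|h| ^+ n) @ \oo --> l) /\
      series (fun n => a n * h ^+ n) @ \oo --> f (t0 + h).

(* A trajectory at p: an analytic non-constant map t |-> q t defined for
   t in [0, eps], with q 0 = p.  Represented by a total function which is
   analytic (coordinatewise) on an open interval containing [0, eps]. *)
Definition trajectory (R : realType) (N : nat) (q : R -> 'rV[R]_N) (p : 'rV[R]_N) :=
  q 0 = p /\
  exists eps : R, 0 < eps /\
    (exists d : R, 0 < d /\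
       forall t : R, - d < t < eps + d ->
         forall i : 'I_N, analytic1_at (fun s => q s ord0 i) t) /\
    (exists t : R, 0 <= t <= eps /\ q t != p).

Definition vanishing (R : realType) (V : normedModType R) (k : nat) (phi : R -> V) :=
  forall i : nat, (1 <= i <= k)%N -> derive1n i phi 0 = 0.

Definition active (R : realType) (V : normedModType R) (k : nat) (phi : R -> V) :=
  vanishing k.-1 phi /\ ~ vanishing k phi.

Definition flex (R : realType) (N : nat) (E : 'rV[R]_N -> R) (p : 'rV[R]_N)
    (j k : nat) (q : R -> 'rV[R]_N) :=
  trajectory q p /\ active j q /\ vanishing k (E \o q).

Definition sometimes_slowly (R : realType) (N : nat) (E : 'rV[R]_N -> R)
    (p : 'rV[R]_N) (s : R) :=
  exists q : R -> 'rV[R]_N, trajectory q p /\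
    exists c2 d : R, 0 < c2 /\ 0 < d /\
      forall t : R, 0 <= t <= d -> E (q t) - E p <= c2 * powR (enorm (q t - p)) s.

Definition local_min (R : realType) (N : nat) (E : 'rV[R]_N -> R) (p : 'rV[R]_N) :=
  exists d : R, 0 < d /\ forall x : 'rV[R]_N, enorm (x - p) < d -> E p <= E x.

(* Main.v *)
Require Import Defs.
From HB Require Import structures.
From mathcomp Require Import all_boot all_order all_algebra.
From mathcomp Require Import all_classical all_reals all_analysis.
From mathcomp Require Import ring lra.

Module PLib.
Set Implicit Arguments. Unset Strict Implicit. Unset Printing Implicit Defensive.
Import Order.TTheory GRing.Theory Num.Theory.
Import numFieldNormedType.Exports.
Local Open Scope classical_set_scope.
Local Open Scope ring_scope.
Section PS.
Variable R : realType.
Implicit Types (b : nat -> R) (t r B : R).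

Definition ABS b r B := forall M, series (fun n => `|b n| * r ^+ n) M <= B.
Definition VAL (f : R -> R) b r :=
  forall t, `|t| <= r -> series (fun n => b n * t ^+ n) @ \oo --> f t.
Definition Fb b t := limn (series (fun n => b n * t ^+ n)).

Lemma cvg_le_bound (u : nat -> R) l c : u @ \oo --> l -> (forall n, u n <= c) -> l <= c.
Proof. move=> ul uc; apply: (ler_cvg_to ul (cvg_cst c)); exact: nearW. Qed.

Lemma nn_bounded_cvg (u : nat -> R) B :
  (forall n, 0 <= u n) -> (forall M, series u M <= B) -> cvgn (series u).
Proof.
move=> u0 uB; apply: nondecreasing_is_cvgn.
  by apply/nondecreasing_seqP => n; rewrite seriesSr lerDl.
by exists B => _ [n _ <-]; exact: uB.
Qed.

Lemma ABS_cvg b r B t : ABS b r B -> `|t| <= r ->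
  cvgn (series (fun n => b n * t ^+ n)) /\ `|Fb b t| <= B.
Proof.
move=> hB ht.
have le1 : forall M, [normed series (fun n => b n * t ^+ n)] M <= B.
  move=> M; apply: le_trans (hB M); rewrite /= /series /=.
  apply: ler_sum => n _; rewrite normrM normrX ler_wpM2l //.
  by apply: lerXn2r; rewrite ?nnegrE // (le_trans _ ht).
have cn : cvgn [normed series (fun n => b n * t ^+ n)].
  by apply: (nn_bounded_cvg (B := B)) => // n; exact: normr_ge0.
have cs := normed_cvg cn.
split => //; rewrite /Fb; apply: le_trans (lim_series_norm cn) _.
apply: (cvg_le_bound cn) => //.
Qed.

End PS.
Section PS2.
Variable R : realType.
Implicit Types (b : nat -> R) (t r B : R).

Lemma cvg_le_near (u : nat -> R) l c : u @ \oo --> l ->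
  (\forall n \near \oo, u n <= c) -> l <= c.
Proof. by move=> ul uc; apply: (ler_cvg_to ul (cvg_cst c)). Qed.

Lemma cvg_bigsum (M : nat) (u : nat -> nat -> R) (l : nat -> R) :
  (forall m, u m @ \oo --> l m) ->
  (fun K => \sum_(0 <= m < M) u m K) @ \oo --> \sum_(0 <= m < M) l m.
Proof.
move=> hu; elim: M => [|M ih].
  rewrite big_geq //; under eq_cvg do rewrite big_geq //; exact: cvg_cst.
rewrite big_nat_recr //=; under eq_cvg do rewrite big_nat_recr //=.
exact: cvgD ih (hu M).
Qed.

Lemma ABS_ge0 b r B : ABS b r B -> 0 <= B.
Proof. by move=> h; have := h 0%N; rewrite /series /= big_geq. Qed.

Lemma ABS_VAL b r B : ABS b r B -> VAL (Fb b) b r.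
Proof. by move=> h t ht; have [c _] := ABS_cvg h ht; exact: c. Qed.

Lemma VAL_eq f b r t : VAL f b r -> `|t| <= r -> f t = Fb b t.
Proof. by move=> h ht; rewrite /Fb (cvg_lim _ (h t ht)). Qed.

Lemma ABS_mono b r r' B : ABS b r B -> 0 <= r' <= r -> ABS b r' B.
Proof.
move=> h /andP[r0 rr] M; apply: le_trans (h M); apply: ler_sum => n _.
by rewrite ler_wpM2l // lerXn2r // nnegrE (le_trans r0).
Qed.

Lemma ABS_limn b r : cvgn (series (fun n => `|b n| * r ^+ n)) -> 0 <= r ->
  ABS b r (limn (series (fun n => `|b n| * r ^+ n))).
Proof.
move=> c r0 M; apply: nondecreasing_cvgn_le => //.
apply/nondecreasing_seqP => n; rewrite seriesSr lerDl mulr_ge0 //.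
exact: exprn_ge0.
Qed.

Lemma Fb0 b : Fb b 0 = b 0%N.
Proof.
rewrite /Fb; apply: cvg_lim => //; apply: cvg_near_cst.
near=> n; rewrite /series /=.
have n1 : (1 <= n)%N by near: n; exact: nbhs_infty_ge.
rewrite big_ltn //= expr0 mulr1 big_nat_cond big1 ?addr0 // => i /andP[/andP[i1 _] _].
by rewrite expr0n; case: i i1 => // i _; rewrite mulr0.
Unshelve. all: by end_near. Qed.

Lemma ABS_tail b r B t k : 0 < r -> ABS b r B -> `|t| <= r ->
  `|Fb b t - series (fun n => b n * t ^+ n) k| <= (`|t| / r) ^+ k * B.
Proof.
move=> r0 hB ht; have [c _] := ABS_cvg hB ht.
have cv : (fun M => series (fun n => b n * t ^+ n) M - series (fun n => b n * t ^+ n) k)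
   @ \oo --> Fb b t - series (fun n => b n * t ^+ n) k.
  by apply: cvgB => //; exact: cvg_cst.
apply: (cvg_le_near (cvg_norm cv)).
near=> M.
have kM : (k <= M)%N by near: M; exact: nbhs_infty_ge.
have q0 : 0 <= `|t| / r by rewrite divr_ge0 // ltW.
have q1 : `|t| / r <= 1 by rewrite ler_pdivrMr // mul1r.
rewrite sub_series_geq //; apply: le_trans (ler_norm_sum _ _ _) _.
apply: le_trans (_ : (`|t| / r) ^+ k * \sum_(k <= n < M) `|b n| * r ^+ n <= _).
  rewrite mulr_sumr; apply: ler_sum_nat => n /andP[kn _].
  rewrite normrM normrX mulrCA ler_wpM2l //.
  have -> : `|t| ^+ n = (`|t| / r) ^+ n * r ^+ n.
    by rewrite -exprMn divfK // gt_eqF.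
  apply: ler_wpM2r; first by rewrite exprn_ge0 // ltW.
  by rewrite -(subnKC kn) exprD; apply: ler_piMr; rewrite ?exprn_ge0 // exprn_ile1.
rewrite ler_wpM2l ?exprn_ge0 //; apply: le_trans (hB M).
rewrite /series /= [X in _ <= X](@big_cat_nat _ _ _ k) //= lerDr.
by apply: sumr_ge0 => n _; rewrite mulr_ge0 // exprn_ge0 // ltW.
Unshelve. all: by end_near. Qed.

End PS2.
Section PS3.
Variable R : realType.

Lemma series_nd (u : nat -> R) : (forall n, 0 <= u n) -> nondecreasing_seq (series u).
Proof. by move=> u0; apply/nondecreasing_seqP => n; rewrite seriesSr lerDl. Qed.

Lemma P2 (f : nat -> R -> R) (b : nat -> nat -> R) (Bs : nat -> R) (r S : R) (G : R -> R) :
  0 < r ->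
  (forall n, ABS (b n) r (Bs n)) -> (forall n, VAL (f n) (b n) r) ->
  (forall K, series Bs K <= S) ->
  (forall t, `|t| <= r -> series (fun n => f n t) @ \oo --> G t) ->
  exists beta, ABS beta r S /\ VAL G beta r.
Proof.
move=> r0 hB hV hS hG.
have Bs0 : forall n, 0 <= Bs n := fun n => ABS_ge0 (hB n).
have cB : cvgn (series Bs) := nn_bounded_cvg Bs0 hS.
pose L := limn (series Bs).
have BL : forall K, series Bs K <= L := nondecreasing_cvgn_le (series_nd Bs0) cB.
have rm0 : forall m, 0 < r ^+ m by move=> m; rewrite exprn_gt0.
have bnm : forall n m, `|b n m| * r ^+ m <= Bs n.
  move=> n m; apply: le_trans (hB n m.+1); rewrite /series /= big_nat_recr //= lerDr.
  by apply: sumr_ge0 => i _; rewrite mulr_ge0 // ltW.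
have cb : forall m, cvgn (series (fun n => b n m)).
  move=> m; apply: normed_cvg.
  apply: (nn_bounded_cvg (B := S / r ^+ m)) => [n|M]; first exact: normr_ge0.
  rewrite /= ler_pdivlMr // /series /= mulr_suml; apply: le_trans (hS M).
  by apply: ler_sum => n _; exact: bnm.
pose beta m := limn (series (fun n => b n m)).
exists beta; split.
- move=> M.
  have cv : (fun K => \sum_(0 <= m < M) `|series (fun n => b n m) K| * r ^+ m)
      @ \oo --> series (fun m => `|beta m| * r ^+ m) M.
    rewrite /series /=; apply: cvg_bigsum => m.
    by apply: cvgM; [exact: cvg_norm (cb m) | exact: cvg_cst].
  apply: (cvg_le_bound cv) => K; apply: le_trans (hS K).
  apply: le_trans (_ : \sum_(0 <= m < M) \sum_(0 <= n < K) `|b n m| * r ^+ m <= _).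
    apply: ler_sum => m _; rewrite -mulr_suml; apply: ler_wpM2r; first exact: ltW.
    exact: ler_norm_sum.
  by rewrite exchange_big /= /series /=; apply: ler_sum => n _; exact: (hB n M).
- move=> t ht; apply/cvgrPdist_le => e e0.
  have e30 : 0 < e / 3 by rewrite divr_gt0.
  have c1 : \forall K \near \oo, `|L - series Bs K| <= e / 3.
    by apply: cvgr_dist_le.

  have c2 : \forall K \near \oo, `|G t - series (fun n => f n t) K| <= e / 3.
    by apply: cvgr_dist_le => //; exact: hG.
  have [K [hK1 hK2]] : exists K, `|L - series Bs K| <= e / 3 /\
      `|G t - series (fun n => f n t) K| <= e / 3.
    apply: (@filter_ex _ (nbhs \oo)).
    by near=> K; split; [near: K; exact: c1 | near: K; exact: c2].
  have cfK := cvg_bigsum (M := K) (fun n => hV n t ht).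
  have c3 : \forall M \near \oo, `|\sum_(0 <= n < K) f n t -
       \sum_(0 <= n < K) series (fun m => b n m * t ^+ m) M| <= e / 3.
    by apply: cvgr_dist_le => //; exact: cfK.
  near=> M.
  have hM : `|\sum_(0 <= n < K) f n t -
       \sum_(0 <= n < K) series (fun m => b n m * t ^+ m) M| <= e / 3.
    by near: M; exact: c3.
  have main : `|series (fun m => beta m * t ^+ m) M -
       \sum_(0 <= n < K) series (fun m => b n m * t ^+ m) M| <= L - series Bs K.
    pose D K' := \sum_(0 <= m < M) series (fun n => b n m) K' * t ^+ m -
                 \sum_(0 <= n < K) series (fun m => b n m * t ^+ m) M.
    have cD : D @ \oo --> series (fun m => beta m * t ^+ m) M -
       \sum_(0 <= n < K) series (fun m => b n m * t ^+ m) M.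
      apply: cvgB; last exact: cvg_cst.
      rewrite /series /=; apply: cvg_bigsum => m.
      by apply: cvgM; [exact: (cb m) | exact: cvg_cst].
    apply: (cvg_le_near (cvg_norm cD)); near=> K'.
    have KK : (K <= K')%N by near: K'; exact: nbhs_infty_ge.
    have -> : D K' = \sum_(K <= n < K') \sum_(0 <= m < M) b n m * t ^+ m.
      rewrite /D /series /=.
      under eq_bigr do rewrite mulr_suml.
      rewrite exchange_big /= (@big_cat_nat _ _ _ K) //= addrC addrK.
      done.
    apply: le_trans (ler_norm_sum _ _ _) _.
    apply: le_trans (_ : \sum_(K <= n < K') Bs n <= _).
      apply: ler_sum => n _; apply: le_trans (ler_norm_sum _ _ _) _.
      apply: le_trans (hB n M); rewrite /series /=; apply: ler_sum => m _.
      rewrite normrM normrX ler_wpM2l //.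
      by apply: lerXn2r; rewrite ?nnegrE // (le_trans _ ht).
    by rewrite -sub_series_geq // lerB.
  have hK1' : L - series Bs K <= e / 3.
    by apply: le_trans hK1; rewrite ler_norm.
  move: hK2 hM main hK1'; rewrite /series /=.
  set A := \sum_(0 <= n < K) f n t.
  set Bm := \sum_(0 <= n < K) _.
  set C := \sum_(0 <= m < M) _.
  move=> h1 h2 h3 h4.
  have -> : G t - C = (G t - A) + (A - Bm) + (Bm - C) by ring.
  apply: le_trans (ler_normD _ _) _; apply: le_trans (lerD (ler_normD _ _) (lexx _)) _.
  rewrite (distrC Bm); lra.
Unshelve. all: by end_near. Qed.

End PS3.
Section PS4.
Variable R : realType.
Implicit Types (b : nat -> R) (t r B : R).

Definition AN r (f : R -> R) B := exists b, ABS b r B /\ VAL f b r.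

Lemma series_delta0 (u : nat -> R) M : (forall m, (0 < m)%N -> u m = 0) ->
  series u M.+1 = u 0%N.
Proof.
move=> u0; rewrite /series /= big_ltn // big_nat_cond big1 ?addr0 //.
by move=> i /andP[/andP[h _] _]; exact: u0.
Qed.

Lemma AN_ext r f g B : (forall t, `|t| <= r -> f t = g t) -> AN r f B -> AN r g B.
Proof. by move=> fg [b [h1 h2]]; exists b; split => // t ht; rewrite -fg //; exact: h2. Qed.

Lemma AN_le r f B B' : B <= B' -> AN r f B -> AN r f B'.
Proof. by move=> BB [b [h1 h2]]; exists b; split => // M; apply: le_trans (h1 M) BB. Qed.

Lemma AN_cst r c : AN r (fun _ => c) `|c|.
Proof.
exists (fun n => if n == 0%N then c else 0); split.
- case=> [|M]; first by rewrite /series /= big_geq.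
  by rewrite series_delta0 /= ?expr0 ?mulr1 // => m; case: m => // m _; rewrite normr0 mul0r.
- move=> t ht; apply: cvg_near_cst; near=> M.
  have M1 : (1 <= M)%N by near: M; exact: nbhs_infty_ge.
  by rewrite -(prednK M1) series_delta0 /= ?expr0 ?mulr1 // => m; case: m => // m _; rewrite mul0r.
Unshelve. all: by end_near. Qed.

Lemma AN_add r f g Bf Bg : 0 <= r -> AN r f Bf -> AN r g Bg -> AN r (fun t => f t + g t) (Bf + Bg).
Proof.
move=> r0 [a [ha va]] [c [hc vc]]; exists (fun n => a n + c n); split.
- move=> M; apply: le_trans (lerD (ha M) (hc M)); rewrite /series /= -big_split /=.
  apply: ler_sum => n _; rewrite -mulrDl; apply: ler_wpM2r; last exact: ler_normD.
  exact: exprn_ge0.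
- move=> t ht.
  have -> : series (fun n => (a n + c n) * t ^+ n) =
     series (fun n => a n * t ^+ n) + series (fun n => c n * t ^+ n).
    by rewrite -seriesD; congr series; apply/funext => n /=; rewrite mulrDl.
  by apply: cvgD; [exact: va | exact: vc].
Qed.

Lemma shift_sum (F : nat -> R) n M :
  \sum_(0 <= m < M) (if (n <= m)%N then F (m - n)%N else 0) = \sum_(0 <= i < M - n) F i.
Proof.
case: (leqP n M) => nM.
- rewrite (@big_cat_nat _ _ _ n) //=.
  have -> : \sum_(0 <= i < n) (if (n <= i)%N then F (i - n)%N else 0) = 0.
    rewrite big_nat_cond big1 // => i /andP[/andP[_ h] _]; by rewrite leqNgt h.
  rewrite add0r.
  rewrite -{1}(add0n n) big_addn; apply: eq_bigr => i _; rewrite leq_addl addnK //.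
- rewrite (_ : M - n = 0)%N; last by apply/eqP; rewrite subn_eq0 ltnW.
  rewrite [RHS]big_geq // big_nat_cond big1 // => i /andP[/andP[_ h] _].
  by rewrite leqNgt (ltn_trans h nM).
Qed.

End PS4.
Section PS5.
Variable R : realType.
Implicit Types (b : nat -> R) (t r B : R).

Lemma AN_mul r f g Bf Bg : 0 < r -> AN r f Bf -> AN r g Bg ->
  AN r (fun t => f t * g t) (Bf * Bg).
Proof.
move=> r0 [a [ha va]] [c [hc vc]].
pose bb n m := if (n <= m)%N then a n * c (m - n)%N else 0.
have Bg0 := ABS_ge0 hc.
suff [beta [h1 h2]] : exists beta, ABS beta r (Bf * Bg) /\ VAL (fun t => f t * g t) beta r.
  by exists beta.
apply: (@P2 R (fun n t => a n * t ^+ n * g t) (fun n => bb n)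
   (fun n => `|a n| * r ^+ n * Bg) r (Bf * Bg) (fun t => f t * g t) r0).
- move=> n M; rewrite /series /=.
  have -> : \sum_(0 <= m < M) `|bb n m| * r ^+ m = \sum_(0 <= m < M)
      (if (n <= m)%N then `|a n| * r ^+ n * (`|c (m - n)%N| * r ^+ (m - n)) else 0).
    apply: eq_bigr => m _; rewrite /bb; case: ifP => nm; last by rewrite normr0 mul0r.
    by rewrite normrM -[in r ^+ m](subnKC nm) exprD mulrACA.
  rewrite (shift_sum (fun i => `|a n| * r ^+ n * (`|c i| * r ^+ i))) -mulr_sumr.
  apply: ler_wpM2l; last exact: hc.
  by rewrite mulr_ge0 // exprn_ge0 // ltW.
- move=> n t ht.
  have -> : series (fun m => bb n m * t ^+ m) =
      (fun M => a n * t ^+ n * series (fun i => c i * t ^+ i) (M - n)%N).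
    apply/funext => M; rewrite /series /= mulr_sumr.
    rewrite -(shift_sum (fun i => a n * t ^+ n * (c i * t ^+ i))).
    apply: eq_bigr => m _; rewrite /bb; case: ifP => nm; last by rewrite mul0r.
    by rewrite -[in t ^+ m](subnKC nm) exprD mulrACA.
  apply: cvgM; first exact: cvg_cst.
  have := vc t ht; rewrite -(cvg_centern n); exact.
- move=> K; rewrite /series /= -mulr_suml; apply: ler_wpM2r => //; exact: ha.
- move=> t ht.
  have -> : series (fun n => a n * t ^+ n * g t) =
      (fun K => series (fun n => a n * t ^+ n) K * g t).
    by apply/funext => K; rewrite /series /= mulr_suml.
  by apply: cvgM; [exact: va | exact: cvg_cst].
Qed.

Lemma AN_pow r f B k : 0 < r -> AN r f B -> AN r (fun t => f t ^+ k) (B ^+ k).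
Proof.
move=> r0 hf; elim: k => [|k ih].
  by apply: AN_ext (AN_le _ (AN_cst r 1)) => [t _|]; rewrite ?expr0 ?normr1.
apply: AN_ext (AN_le _ (AN_mul r0 ih hf)) => [t _|]; by rewrite exprSr.
Qed.

Lemma AN_sumseq (I : Type) r (s : seq I) (P : pred I) (F : I -> R -> R) (Bf : I -> R) :
  0 <= r -> (forall i, P i -> AN r (F i) (Bf i)) ->
  AN r (fun t => \sum_(i <- s | P i) F i t) (\sum_(i <- s | P i) Bf i).
Proof.
move=> r0 hF; elim: s => [|i s ih].
  apply: AN_ext (AN_le _ (AN_cst r 0)) => [t _|]; by rewrite !big_nil ?normr0.
rewrite big_cons; case: ifP => Pi.
  by apply: AN_ext (AN_add r0 (hF i Pi) ih) => t _; rewrite big_cons Pi.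
by apply: AN_ext ih => t _; rewrite big_cons Pi.
Qed.

Lemma AN_prodseq (I : Type) r (s : seq I) (P : pred I) (F : I -> R -> R) (Bf : I -> R) :
  0 < r -> (forall i, P i -> AN r (F i) (Bf i)) ->
  AN r (fun t => \prod_(i <- s | P i) F i t) (\prod_(i <- s | P i) Bf i).
Proof.
move=> r0 hF; elim: s => [|i s ih].
  apply: AN_ext (AN_le _ (AN_cst r 1)) => [t _|]; by rewrite !big_nil ?normr1.
rewrite big_cons; case: ifP => Pi.
  by apply: AN_ext (AN_mul r0 (hF i Pi) ih) => t _; rewrite big_cons Pi.
by apply: AN_ext ih => t _; rewrite big_cons Pi.
Qed.

End PS5.
Section PS6.
Variable R : realType.
Implicit Types (b : nat -> R) (t r B : R).

Definition OPEN b r := forall K, 0 <= K < r -> exists B, ABS b K B.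

Lemma near_abs_lt t r : `|t| < r -> \forall s \near t, `|s| < r.
Proof.
move=> tr; apply/nbhs_ballP; exists (r - `|t|); first by rewrite /= subr_gt0.
move=> s; rewrite -ball_normE /ball_ /= => h.
have := ler_normD (s - t) t; rewrite subrK distrC; lra.
Qed.

Lemma nx_bound (x : R) i : 0 <= x < 1 -> i.+1%:R * x ^+ i <= (1 - x)^-1.
Proof.
move=> /andP[x0 x1].
have h1 : i.+1%:R * x ^+ i <= \sum_(j < i.+1) x ^+ j.
  rewrite -[i.+1 in X in X * _]card_ord -sum1_card natr_sum mulr_suml.
  apply: ler_sum => j _; rewrite mul1r.
  by apply: ler_wiXn2l => //; [exact: ltW | exact: leq_ord].
apply: le_trans h1 _.
have s0 : 0 < 1 - x by rewrite subr_gt0.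
rewrite -[(1 - x)^-1]mulr1 ler_pdivlMl // -opprB mulNr -subrX1 opprB lerBlDr lerDl.
exact: exprn_ge0.
Qed.

Lemma ABS_diffs b K K' B : ABS b K' B -> 0 <= K < K' ->
  ABS (pseries_diffs b) K ((1 - K / K')^-1 / K' * B).
Proof.
move=> hB /andP[K0 KK].
have K'0 : 0 < K' by apply: le_lt_trans KK.
have x01 : 0 <= K / K' < 1.
  apply/andP; split; first by rewrite divr_ge0 // ltW.
  by rewrite ltr_pdivrMr // mul1r.
move=> M; rewrite /series /= /pseries_diffs.
apply: le_trans (_ : \sum_(0 <= i < M) (1 - K / K')^-1 / K' * (`|b i.+1| * K' ^+ i.+1) <= _).
  apply: ler_sum => i _.
  have -> : K ^+ i = (K / K') ^+ i * K' ^+ i by rewrite -exprMn divfK // gt_eqF.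
  rewrite normrM ger0_norm // exprS.
  rewrite (_ : i.+1%:R * `|b i.+1| * ((K / K') ^+ i * K' ^+ i) =
     (i.+1%:R * (K / K') ^+ i) * (`|b i.+1| * K' ^+ i)); last by ring.
  rewrite (_ : (1 - K / K')^-1 / K' * (`|b i.+1| * (K' * K' ^+ i)) =
     (1 - K / K')^-1 * (`|b i.+1| * K' ^+ i)); last by field; rewrite gt_eqF //= subr_eq0 gt_eqF.
  apply: ler_wpM2r; first by rewrite mulr_ge0 // exprn_ge0 // ltW.
  exact: nx_bound.
have s0 : 0 < 1 - K / K' by rewrite subr_gt0; case/andP: x01.
rewrite -mulr_sumr; apply: ler_wpM2l.
  by apply: mulr_ge0; rewrite invr_ge0 ltW.
apply: le_trans (hB M.+1); rewrite /series /= big_nat_recl //= lerDr.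
by rewrite mulr_ge0 // exprn_ge0 // ltW.
Qed.

End PS6.
Section PS7.
Variable R : realType.
Implicit Types (b : nat -> R) (t r B : R).

Lemma OPEN_diffs b r : OPEN b r -> OPEN (pseries_diffs b) r.
Proof.
move=> hb K /andP[K0 Kr].
have h : 0 <= (K + r) / 2 < r by apply/andP; split; lra.
have [B hB] := hb _ h; eexists; apply: ABS_diffs hB _.
by apply/andP; split; lra.
Qed.

Lemma OPEN_iter b r i : OPEN b r -> OPEN (iter i (@pseries_diffs R) b) r.
Proof. by move=> hb; elim: i => [|i ih] //=; exact: OPEN_diffs. Qed.

Lemma OPEN_derive b r t : OPEN b r -> `|t| < r ->
  is_derive t 1 (Fb b) (Fb (pseries_diffs b) t).
Proof.
move=> hb tr; have t0 := normr_ge0 t.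
have K0r : 0 <= (`|t| + r) / 2 < r by apply/andP; split; lra.
have [B1 h1] := hb _ K0r.
have [B2 h2] := OPEN_diffs hb K0r.
have [B3 h3] := OPEN_diffs (OPEN_diffs hb) K0r.
have nK : `|(`|t| + r) / 2| <= (`|t| + r) / 2 by rewrite ger0_norm //; lra.
have c1 := (ABS_cvg h1 nK).1.
have c2 := (ABS_cvg h2 nK).1.
have c3 := (ABS_cvg h3 nK).1.
apply: (pseries_snd_diffs c1 c2 c3); rewrite [X in _ < X]ger0_norm; lra.
Qed.

Lemma derive1n_local (V : normedModType R) (f g : R -> V) r :
  (forall t, `|t| < r -> f t = g t) ->
  forall i t, `|t| < r -> derive1n i f t = derive1n i g t.
Proof.
move=> fg; elim => [|i ih] t tr; first exact: fg.
rewrite !derive1nS !derive1E; apply: near_eq_derive.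
near=> s; apply: ih; near: s; exact: near_abs_lt.
Unshelve. all: by end_near. Qed.

Lemma Fb_derive1n b r : OPEN b r ->
  forall i t, `|t| < r -> derive1n i (Fb b) t = Fb (iter i (@pseries_diffs R) b) t.
Proof.
move=> hb; elim => [|i ih] t tr //.
rewrite derive1nS derive1E (@near_eq_derive _ _ _ _ (Fb (iter i (@pseries_diffs R) b))); last first.
  near=> s; apply: ih; near: s; exact: near_abs_lt.
by have [_ ->] := OPEN_derive (OPEN_iter i hb) tr.
Unshelve. all: by end_near. Qed.

Lemma iter_diffs0 i b : iter i (@pseries_diffs R) b 0%N = i`!%:R * b i.
Proof.
elim: i b => [|i ih] b; first by rewrite /= mul1r.
by rewrite iterSr ih /pseries_diffs factS natrM mulrA [i`!%:R * _]mulrC.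
Qed.

Lemma Fb_derive1n0 b r i : 0 < r -> OPEN b r -> derive1n i (Fb b) 0 = i`!%:R * b i.
Proof. by move=> r0 hb; rewrite (Fb_derive1n hb) ?normr0 // Fb0 iter_diffs0. Qed.

Lemma derive1n_row (N : nat) (Q : R -> 'rV[R]_N) (F : 'I_N -> nat -> R) r :
  (forall m, OPEN (F m) r) -> (forall t, `|t| < r -> Q t = \row_m Fb (F m) t) ->
  forall i t, `|t| < r -> derive1n i Q t = \row_m Fb (iter i (@pseries_diffs R) (F m)) t.
Proof.
move=> hF hQ; elim => [|i ih] t tr; first exact: hQ.
rewrite derive1nS derive1E (@near_eq_derive _ _ _ _
   (fun s => \row_m Fb (iter i (@pseries_diffs R) (F m)) s)); last first.
  near=> s; apply: ih; near: s; exact: near_abs_lt.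
have hd : forall m, is_derive t 1 (Fb (iter i (@pseries_diffs R) (F m)))
    (Fb (iter i.+1 (@pseries_diffs R) (F m)) t).
  by move=> m; rewrite iterS; exact: OPEN_derive (OPEN_iter i (hF m)) tr.
have ee : forall c, (fun x => (\row_m Fb (iter i (@pseries_diffs R) (F m)) x) ord0 c) =
    Fb (iter i (@pseries_diffs R) (F c)).
  by move=> c; apply/funext => x; rewrite mxE.
rewrite derive_mx; last first.
  apply/derivable_mxP => a c; rewrite (ord1 a) ee; by case: (hd c).
apply/matrixP => a c; rewrite !mxE (ord1 a) ee.
by case: (hd c).
Unshelve. all: by end_near. Qed.

End PS7.
Section PS8.
Variable R : realType.

Lemma sum_sq_le (I : Type) (s : seq I) (P : pred I) (F : I -> R) :
  (forall i, 0 <= F i) -> \sum_(i <- s | P i) F i ^+ 2 <= (\sum_(i <- s | P i) F i) ^+ 2.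
Proof.
move=> F0; elim: s => [|i s ih]; first by rewrite !big_nil expr0n.
rewrite !big_cons; case: ifP => // _.
have S0 : 0 <= \sum_(j <- s | P j) F j by apply: sumr_ge0 => j _.
move: ih S0 (F0 i); set Q := \sum_(j <- s | P j) F j ^+ 2.
set S := \sum_(j <- s | P j) F j; move=> ih S0 Fi0; nra.
Qed.

Lemma enorm_le_sum N (x : 'rV[R]_N) : enorm x <= \sum_i `|x ord0 i|.
Proof.
have S0 : 0 <= \sum_i `|x ord0 i| by apply: sumr_ge0 => i _.
rewrite /enorm -(ger0_norm S0) -sqrtr_sqr ler_sqrt; last exact: sqr_ge0.
have -> : \sum_i x ord0 i ^+ 2 = \sum_i `|x ord0 i| ^+ 2.
  by apply: eq_bigr => i _; rewrite real_normK ?num_real.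
by apply: sum_sq_le => i.
Qed.

Lemma coord_le_enorm N (x : 'rV[R]_N) i : `|x ord0 i| <= enorm x.
Proof.
rewrite /enorm -sqrtr_sqr ler_sqrt; last by apply: sumr_ge0 => k _; exact: sqr_ge0.
rewrite (bigD1 i) //= lerDl; apply: sumr_ge0 => k _; exact: sqr_ge0.
Qed.

Lemma fin_min N (g : 'I_N -> R) : (forall m, 0 < g m) ->
  exists r, 0 < r /\ forall m, r <= g m.
Proof.
move=> g0; have S0 : 0 <= \sum_m (g m)^-1 by apply: sumr_ge0 => m _; rewrite invr_ge0 ltW.
exists (1 + \sum_m (g m)^-1)^-1; split; first by rewrite invr_gt0; lra.
move=> m; rewrite -[g m]invrK lef_pV2 ?posrE ?invr_gt0 //; last by lra.
have R0 : 0 <= \sum_(k | k != m) (g k)^-1 by apply: sumr_ge0 => k _; rewrite invr_ge0 ltW.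
rewrite (bigD1 m) //=; lra.
Qed.

End PS8.
Section PS9.
Variable R : realType.

Lemma coordsA N (q : R -> 'rV[R]_N) :
  (forall m : 'I_N, analytic1_at (fun s => q s ord0 m) 0) ->
  exists (a : 'I_N -> nat -> R) (r1 : R), 0 < r1 /\ (forall m, OPEN (a m) r1) /\
    (forall t, `|t| < r1 -> q t = \row_m Fb (a m) t).
Proof.
move=> han.
have : forall m : 'I_N, exists ra : R * (nat -> R), 0 < ra.1 /\
   forall h : R, `|h| < ra.1 ->
      (exists l : R, series (fun n => `|ra.2 n| * `|h| ^+ n) @ \oo --> l) /\
      series (fun n => ra.2 n * h ^+ n) @ \oo --> q (0 + h) ord0 m.
  by move=> m; have [r [a [r0 h]]] := han m; exists (r, a).
move=> /choice [f hf].
have [r1 [r10 r1le]] := fin_min (fun m => (hf m).1).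
exists (fun m => (f m).2), r1; split => //; split.
- move=> m K /andP[K0 Kr].
  have Km : `|K| < (f m).1 by rewrite ger0_norm //; apply: lt_le_trans Kr (r1le m).
  have [[l hl] _] := (hf m).2 K Km.
  exists l => M.
  have hl' : series (fun n => `|(f m).2 n| * K ^+ n) @ \oo --> l.
    by move: hl; rewrite ger0_norm.
  rewrite -(cvg_lim _ hl') //.
  apply: nondecreasing_cvgn_le; last exact: (cvgP _ hl').
  by apply: series_nd => n; rewrite mulr_ge0 // exprn_ge0.
- move=> t tr; apply/matrixP => i m; rewrite (ord1 i) mxE.
  have [_ h2] := (hf m).2 t (lt_le_trans tr (r1le m)).
  by rewrite add0r in h2; rewrite /Fb (cvg_lim _ h2).
Qed.

End PS9.
Section PS10.
Variable R : realType.

Lemma compose N (E : 'rV[R]_N -> R) (p : 'rV[R]_N) (q : R -> 'rV[R]_N) (rE : R)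
    (c : ('I_N -> nat) -> R) (rho sig : R) :
  0 < rho -> 0 < sig -> N%:R * sig < rE ->
  (forall h : 'rV[R]_N, enorm h < rE ->
      (exists l : R, series (abs_hom_part c h) @ \oo --> l) /\
      series (hom_part c h) @ \oo --> E (p + h)) ->
  (forall m, AN rho (fun t => q t ord0 m - p ord0 m) sig) ->
  exists (beta : nat -> R) (S : R), ABS beta rho S /\ VAL (fun t => E (q t)) beta rho.
Proof.
move=> rho0 sig0 NrE hE hq.
pose sv : 'rV[R]_N := const_mx sig.
have sumsig : \sum_(i < N) sig = N%:R * sig by rewrite sumr_const card_ord mulr_natl.
have hsv : enorm sv < rE.
  apply: le_lt_trans (enorm_le_sum sv) _.
  under eq_bigr do rewrite mxE ger0_norm ?ltW //.
  by rewrite sumsig.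
have [[l hl] _] := hE sv hsv.
have Bs0 : forall n, 0 <= abs_hom_part c sv n.
  by move=> n; apply: sumr_ge0 => a _; rewrite mulr_ge0.
have BL : forall K, series (abs_hom_part c sv) K <= l.
  move=> K; rewrite -(cvg_lim _ hl) //.
  by apply: nondecreasing_cvgn_le; [exact: series_nd | exact: (cvgP _ hl)].
have hbound : forall m t, `|t| <= rho -> `|q t ord0 m - p ord0 m| <= sig.
  move=> m t ht; have [b [hb vb]] := hq m.
  by rewrite (VAL_eq vb ht); have [_ ->] := ABS_cvg hb ht.
have hmon : forall n (a : {ffun 'I_N -> 'I_n.+1}),
    AN rho (fun t => monom (fun i => (a i : nat)) (q t - p)) `|monom (fun i => (a i : nat)) sv|.
  move=> n a.
  have -> : `|monom (fun i => (a i : nat)) sv| = \prod_(i < N) sig ^+ a i.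
    rewrite /monom ger0_norm; last by apply: prodr_ge0 => i _; rewrite mxE exprn_ge0 // ltW.
    by apply: eq_bigr => i _; rewrite mxE.
  apply: (AN_ext (f := fun t => \prod_(i < N) (q t ord0 i - p ord0 i) ^+ a i)).
    by move=> t _; rewrite /monom; apply: eq_bigr => i _; rewrite !mxE.
  apply: (@AN_prodseq R 'I_N rho _ _ (fun i t => (q t ord0 i - p ord0 i) ^+ a i)
                     (fun i => sig ^+ a i)) => // i _.
  exact: AN_pow.
have hn : forall n, AN rho (fun t => hom_part c (q t - p) n) (abs_hom_part c sv n).
  move=> n; rewrite /hom_part /abs_hom_part.
  refine (@AN_sumseq R {ffun 'I_N -> 'I_n.+1} rho (index_enum _)
     (fun a => (\sum_(i < N) (a i : nat))%N == n)
     (fun a t => c (fun i => (a i : nat)) * monom (fun i => (a i : nat)) (q t - p))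
     (fun a => `|c (fun i => (a i : nat))| * `|monom (fun i => (a i : nat)) sv|) (ltW rho0) _).
  move=> a _; exact: AN_mul (AN_cst _ _) (hmon n a).
have /choice [bb hbb] := hn.
have [beta [h1 h2]] : exists beta, ABS beta rho l /\ VAL (fun t => E (q t)) beta rho.
  apply: (@P2 R (fun n t => hom_part c (q t - p) n) bb (abs_hom_part c sv) rho l
            (fun t => E (q t)) rho0).
  - by move=> n; case: (hbb n).
  - by move=> n; case: (hbb n).
  - exact: BL.
  - move=> t ht.
    have he : enorm (q t - p) < rE.
      apply: le_lt_trans (enorm_le_sum _) _; apply: le_lt_trans NrE.
      rewrite -sumsig; apply: ler_sum => i _; rewrite !mxE; exact: hbound.
    by have [_ h] := hE _ he; move: h; rewrite (addrC p) subrK.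
by exists beta, l.
Qed.

End PS10.
Section PS11.
Variable R : realType.

Lemma series_delta_cvg (c t : R) :
  series (fun n => (if n == 0%N then c else 0) * t ^+ n) @ \oo --> c.
Proof.
apply: cvg_near_cst; near=> M.
have M1 : (1 <= M)%N by near: M; exact: nbhs_infty_ge.
by rewrite -(prednK M1) series_delta0 /= ?expr0 ?mulr1 // => m; case: m => // m _; rewrite mul0r.
Unshelve. all: by end_near. Qed.

Lemma hcoef (b : nat -> R) (f : R -> R) K B :
  0 <= K -> ABS b K B -> (forall t, `|t| <= K -> f t = Fb b t) ->
  ABS (fun n => b n - (if n == 0%N then b 0%N else 0)) K B /\
  VAL (fun t => f t - b 0%N) (fun n => b n - (if n == 0%N then b 0%N else 0)) K.
Proof.
move=> K0 hB hf; split.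
- move=> M; apply: le_trans (hB M); apply: ler_sum => n _.
  apply: ler_wpM2r; first exact: exprn_ge0.
  by case: n => [|n] /=; rewrite ?subrr ?normr0 ?subr0.
- move=> t ht.
  have -> : series (fun n => (b n - (if n == 0%N then b 0%N else 0)) * t ^+ n) =
     (fun M => series (fun n => b n * t ^+ n) M -
               series (fun n => (if n == 0%N then b 0%N else 0) * t ^+ n) M).
    by apply/funext => M; rewrite /series /= -sumrB; apply: eq_bigr => n _; rewrite mulrBl.
  apply: cvgB; last exact: series_delta_cvg.
  by rewrite (hf t ht); exact: (ABS_cvg hB ht).1.
Qed.

Lemma ABS_shrink (b : nat -> R) K B rho : 0 < K -> 0 <= rho <= K -> b 0%N = 0 ->
  ABS b K B -> ABS b rho (rho / K * B).
Proof.
move=> K0 /andP[r0 rK] b0 hB M.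
have q0 : 0 <= rho / K by rewrite divr_ge0 // ltW.
have q1 : rho / K <= 1 by rewrite ler_pdivrMr // mul1r.
apply: le_trans (_ : \sum_(0 <= n < M) rho / K * (`|b n| * K ^+ n) <= _); last first.
  by rewrite -mulr_sumr; apply: ler_wpM2l => //; exact: hB.
apply: ler_sum => n _; case: n => [|n]; first by rewrite b0 normr0 !mul0r mulr0.
rewrite mulrCA; apply: ler_wpM2l; first exact: normr_ge0.
have -> : rho ^+ n.+1 = (rho / K) ^+ n.+1 * K ^+ n.+1 by rewrite -exprMn divfK // gt_eqF.
apply: ler_wpM2r; first by rewrite exprn_ge0 // ltW.
by rewrite exprS; apply: ler_piMr => //; exact: exprn_ile1.
Qed.

Lemma small_zero (x tau0 C : R) : 0 < tau0 -> 0 <= C ->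
  (forall tau, 0 < tau <= tau0 -> `|x| <= tau * C) -> x = 0.
Proof.
move=> t0 C0 h; apply/eqP; apply: contraT => hx.
have ax : 0 < `|x| by rewrite normr_gt0.
pose tau := Num.min tau0 (`|x| / (2 * (C + 1))).
have C1 : 0 < 2 * (C + 1) by lra.
have tpos : 0 < tau by rewrite /tau lt_min t0 divr_gt0.
have tle : tau <= tau0 by rewrite /tau ge_min lexx.
have tle2 : tau <= `|x| / (2 * (C + 1)) by rewrite /tau ge_min lexx orbT.
have := h tau (introT andP (conj tpos tle)).
have : tau * C <= `|x| / (2 * (C + 1)) * C by apply: ler_wpM2r.
have : `|x| / (2 * (C + 1)) * C < `|x|.
  rewrite mulrAC ltr_pdivrMr // ltr_pM2l //; lra.
lra.
Qed.

Lemma sparse_sum (beta : nat -> R) t k0 : (forall i, (1 <= i <= k0)%N -> beta i = 0) ->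
  series (fun n => beta n * t ^+ n) k0.+2 = beta 0%N + beta k0.+1 * t ^+ k0.+1.
Proof.
move=> hz; rewrite /series /= big_nat_recr //= big_ltn //= expr0 mulr1.
rewrite big_nat_cond big1 ?addr0 // => i /andP[/andP[i1 ik] _].
by rewrite hz ?mul0r // i1 -ltnS.
Qed.

End PS11.

Section PS12.
Variable R : realType.
Lemma two_side (a b c y T : R) : `|a - (c + y)| <= T -> `|b - (c + - y)| <= T ->
  c <= a -> c <= b -> `|y| <= T.
Proof.
rewrite !ler_norml => /andP[h1 h2] /andP[h3 h4] h5 h6; apply/andP; split; lra.
Qed.

Lemma lowb_aux (x T hb hv Ay : R) : `|hv - Ay| <= T * hb -> T * hb <= T * x ->
  `|Ay| <= `|hv| + `|hv - Ay| -> `|Ay| = 2 * (T * x) -> T * x <= `|hv|.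
Proof. move=> h1 h2 h3 h4; lra. Qed.
End PS12.

Section PS13.
Variable R : realType.
Lemma pos_add1 (x : R) : 0 <= x -> 0 < x + 1.
Proof. move=> h; lra. Qed.
End PS13.
End PLib.
Import PLib.

Import Order.TTheory GRing.Theory Num.Theory.
Local Open Scope ring_scope.

Theorem lemma3p10 (R : realType) (N : nat) (E : 'rV[R]_N -> R) (p : 'rV[R]_N)
    (j k : nat) :
  analytic_at E p -> local_min E p -> (1 <= j)%N -> (1 <= k)%N ->
  (exists q : R -> 'rV[R]_N, flex E p j (2 * k) q) ->
  sometimes_slowly E p ((2 * k + 2)%:R / j%:R).
Proof.
move=> [rE [c [rE0 hE]]] [dm [dm0 hmin]] j1 k1 [q [htraj [[hvj hnvj] hvan]]].
have [q0 [eps [eps0 [[d [d0 hqan]] _]]]] := htraj.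
have han : forall m, analytic1_at (fun s => q s ord0 m) 0.
  by move=> m; apply: hqan; rewrite oppr_lt0 d0 /= addr_gt0.
have [a [r1 [r10 [hopen hrow]]]] := coordsA han.
have hder : forall i, derive1n i q 0 = \row_m (i`!%:R * a m i).
  move=> i; rewrite (derive1n_row hopen hrow) ?normr0 //.
  by apply/matrixP => x m; rewrite !mxE Fb0 iter_diffs0.
have a0 : forall m, a m 0%N = p ord0 m.
  move=> m; have := hrow 0; rewrite normr0 q0 => /(_ r10) ->.
  by rewrite mxE Fb0.
have fact0 : forall i, i`!%:R != 0 :> R by move=> i; rewrite pnatr_eq0 -lt0n fact_gt0.
have hlow : forall i, (1 <= i <= j.-1)%N -> forall m, a m i = 0.
  move=> i hi m; have := hvj i hi; rewrite hder => /matrixP /(_ ord0 m).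
  by rewrite !mxE => /eqP; rewrite mulf_eq0 (negbTE (fact0 i)) /= => /eqP.
have [m0 hm0] : exists m0, a m0 j != 0.
  case: (pselect (exists m0, a m0 j != 0)) => // hn; exfalso; apply: hnvj.
  move=> i /andP[i1 ij]; rewrite hder; apply/matrixP => x m; rewrite !mxE.
  case: (ltngtP i j) => [ilt|igt|->].
  - by rewrite hlow ?mulr0 // i1 /= -ltnS prednK.
  - by move: ij; rewrite leqNgt igt.
  - case: (eqVneq (a m j) 0) => [->|h]; first by rewrite mulr0.
    by exfalso; apply: hn; exists m.
pose K0 := r1 / 2.
have K00 : 0 < K0 by rewrite /K0 divr_gt0.
have K0r : 0 <= K0 < r1 by apply/andP; split; rewrite /K0; lra.
have [Bm hBm] := choice (fun m => hopen m K0 K0r).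
have Bm0 : forall m, 0 <= Bm m := fun m => ABS_ge0 (hBm m).
pose a' m n := a m n - (if n == 0%N then a m 0%N else 0).
have hA' : forall m, ABS (a' m) K0 (Bm m) /\ VAL (fun t => q t ord0 m - p ord0 m) (a' m) K0.
  move=> m; rewrite -a0; apply: (hcoef (f := fun t => q t ord0 m)) => //.
    exact: ltW.
  by move=> t ht; rewrite (hrow t) ?mxE //; apply: le_lt_trans ht _; lra.
pose sig := rE / N.+1%:R.
have sig0 : 0 < sig by rewrite /sig divr_gt0.
have NrE : N%:R * sig < rE.
  by rewrite /sig mulrA ltr_pdivrMr // mulrC ltr_pM2l // ltr_nat.
pose SB := \sum_m Bm m.
have SB0 : 0 <= SB by apply: sumr_ge0 => m _.
pose rho := K0 * sig / (sig + SB).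
have rho0 : 0 < rho by apply: divr_gt0; [exact: mulr_gt0 | lra].
have rhoK : rho <= K0.
  rewrite /rho -mulrA; apply: ler_piMr; first exact: ltW.
  by rewrite ler_pdivrMr ?mul1r; lra.
have rhoB : forall m, rho / K0 * Bm m <= sig.
  move=> m; have -> : rho / K0 = sig / (sig + SB).
    by rewrite /rho; field; apply/andP; split; rewrite gt_eqF //; lra.
  rewrite mulrAC ler_pdivrMr; last by lra.
  rewrite ler_pM2l //; have : Bm m <= SB by rewrite /SB (bigD1 m) //= lerDl sumr_ge0.
  lra.
have habs : forall m, ABS (a' m) rho sig.
  move=> m M; apply: le_trans (rhoB m).
  apply: (ABS_shrink K00 _ _ (hA' m).1) => //.
    by rewrite (ltW rho0) rhoK.
  by rewrite /a' eqxx subrr.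
have hval : forall m, VAL (fun t => q t ord0 m - p ord0 m) (a' m) rho.
  by move=> m t ht; apply: (hA' m).2; exact: le_trans ht rhoK.
have hAN : forall m, AN rho (fun t => q t ord0 m - p ord0 m) sig.
  by move=> m; exists (a' m); split; [exact: habs | exact: hval].
have [beta [S [hbS hbV]]] := compose rho0 sig0 NrE hE hAN.
have S0 : 0 <= S := ABS_ge0 hbS.
have hEq : forall t, `|t| <= rho -> E (q t) = Fb beta t := fun t ht => VAL_eq hbV ht.
have bopen : OPEN beta rho.
  by move=> K /andP[K0' Kr]; exists S; apply: ABS_mono hbS _; rewrite K0' ltW.
have hdb : forall i, derive1n i (E \o q) 0 = i`!%:R * beta i.
  move=> i; rewrite (derive1n_local (g := Fb beta) (r := rho)) ?normr0 //.
    exact: (Fb_derive1n0 i rho0 bopen).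
  by move=> t tr; rewrite /= hEq // ltW.
have bz : forall i, (1 <= i <= 2 * k)%N -> beta i = 0.
  move=> i hi; have := hvan i hi; rewrite hdb => /eqP.
  by rewrite mulf_eq0 (negbTE (fact0 i)) /= => /eqP.
have b0 : beta 0%N = E p by rewrite -Fb0 -hEq ?normr0 ?ltW // q0.
have tailE : forall t, `|t| <= rho ->
    `|E (q t) - (E p + beta (2 * k).+1 * t ^+ (2 * k).+1)| <=
    (`|t| / rho) ^+ (2 * k).+2 * S.
  by move=> t ht; rewrite hEq // -b0 -(sparse_sum _ bz); exact: ABS_tail.
have hsmall : forall m t, `|t| <= rho ->
    `|q t ord0 m - p ord0 m| <= `|t| / rho * sig.
  move=> m t ht; rewrite (VAL_eq (hval m) ht).
  have := ABS_tail 1%N rho0 (habs m) ht.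
  by rewrite /series /= big_nat1 /a' eqxx subrr mul0r subr0 expr1.
have henorm : forall t, `|t| <= rho -> enorm (q t - p) <= N%:R * (`|t| / rho * sig).
  move=> t ht; apply: le_trans (enorm_le_sum _) _.
  apply: le_trans (_ : \sum_(i < N) (`|t| / rho * sig) <= _).
    by apply: ler_sum => i _; rewrite !mxE; exact: hsmall.
  by rewrite sumr_const card_ord mulr_natl.
pose w := dm / (N%:R * sig + dm).
have Ns0 : 0 <= N%:R * sig by rewrite mulr_ge0 // ltW.
have w0 : 0 < w by rewrite /w divr_gt0 //; lra.
have w1 : w <= 1 by rewrite /w ler_pdivrMr ?mul1r; lra.
have Nw : N%:R * sig * w < dm.
  rewrite /w mulrA ltr_pdivrMr; last by lra.
  nra.
pose tau0 := rho * w.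
have tau00 : 0 < tau0 by rewrite /tau0 mulr_gt0.
have tau0r : tau0 <= rho by rewrite /tau0 ler_piMr // ltW.
have hloc : forall t, `|t| <= tau0 -> E p <= E (q t).
  move=> t ht; apply: hmin; apply: le_lt_trans (henorm t (le_trans ht tau0r)) _.
  apply: le_lt_trans Nw.
  have hu : `|t| / rho <= w by rewrite ler_pdivrMr // mulrC.
  move: hu Ns0; set u := `|t| / rho; set Nn := N%:R; move=> hu Ns0; nra.
have bodd : beta (2 * k).+1 = 0.
  apply: (@small_zero R _ tau0 (S / rho ^+ (2 * k).+2) tau00) => [|tau /andP[t0 tt]].
    by rewrite divr_ge0 // exprn_ge0 // ltW.
  have ht1 : `|tau| <= tau0 by rewrite ger0_norm // ltW.
  have ht2 : `|- tau| <= tau0 by rewrite normrN ger0_norm // ltW.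
  have h1 := tailE tau (le_trans ht1 tau0r).
  have h2 := tailE (- tau) (le_trans ht2 tau0r).
  have l1 := hloc _ ht1.
  have l2 := hloc _ ht2.
  rewrite normrN [`|tau|]ger0_norm in h2; last exact: (ltW t0).
  rewrite [`|tau|]ger0_norm in h1; last exact: (ltW t0).
  have hodd : (- tau) ^+ (2 * k).+1 = - tau ^+ (2 * k).+1.
    by rewrite exprS mulNr exprM sqrrN -exprM -exprS.
  rewrite hodd mulrN in h2.
  have eT : (tau / rho) ^+ (2 * k).+2 * S =
      tau ^+ (2 * k).+1 * (tau * (S / rho ^+ (2 * k).+2)).
    by rewrite expr_div_n exprSr; field; rewrite expf_neq0 // gt_eqF.
  rewrite eT in h1 h2.
  have tn : 0 < tau ^+ (2 * k).+1 by rewrite exprn_gt0.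
  rewrite -(ler_pM2l tn).
  rewrite (_ : tau ^+ (2 * k).+1 * `|beta (2 * k).+1| =
     `|beta (2 * k).+1 * tau ^+ (2 * k).+1|); last first.
    by rewrite normrM [X in _ = _ * X]ger0_norm ?(ltW tn) // mulrC.
  exact: (two_side h1 h2 l1 l2).
have tailE' : forall t, `|t| <= rho ->
    `|E (q t) - E p| <= (`|t| / rho) ^+ (2 * k).+2 * S.
  by move=> t ht; have := tailE t ht; rewrite bodd mul0r addr0.
pose A := a m0 j.
have A0 : 0 < `|A| by rewrite normr_gt0.
have ss : forall t, series (fun n => a' m0 n * t ^+ n) j.+1 = A * t ^+ j.
  move=> t; have := @sparse_sum R (a' m0) t j.-1.
  rewrite prednK // => -> .
    by rewrite /a' eqxx subrr add0r (gtn_eqF j1) subr0.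
  move=> i /andP[i1 ij]; rewrite /a' hlow ?(gtn_eqF i1) ?subr0 //.
  by rewrite i1.
have tailh : forall t, `|t| <= rho ->
    `|(q t ord0 m0 - p ord0 m0) - A * t ^+ j| <= (`|t| / rho) ^+ j.+1 * sig.
  by move=> t ht; rewrite (VAL_eq (hval m0) ht) -(ss t); exact: ABS_tail.
pose tau1 := Num.min rho (`|A| * rho ^+ j.+1 / (2 * sig)).
have tau10 : 0 < tau1.
  by rewrite /tau1 lt_min rho0 /= divr_gt0 // ?mulr_gt0 // exprn_gt0.
have tau1r : tau1 <= rho by rewrite /tau1 ge_min lexx.
have tau1A : tau1 <= `|A| * rho ^+ j.+1 / (2 * sig) by rewrite /tau1 ge_min lexx orbT.
have hlowb : forall t, 0 <= t <= tau1 -> `|A| / 2 * t ^+ j <= enorm (q t - p).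
  move=> t /andP[t0 tt].
  apply: le_trans (coord_le_enorm _ m0); rewrite !mxE.
  have ht : `|t| <= rho by rewrite ger0_norm //; exact: le_trans tt tau1r.
  have := tailh t ht; rewrite [`|t|]ger0_norm //.
  have e : (t / rho) ^+ j.+1 * sig = t ^+ j * (t * sig / rho ^+ j.+1).
    by rewrite expr_div_n exprSr; field; rewrite expf_neq0 // gt_eqF.
  rewrite e.
  have hb : t * sig / rho ^+ j.+1 <= `|A| / 2.
    rewrite ler_pdivrMr ?exprn_gt0 //.
    have := le_trans tt tau1A; rewrite ler_pdivlMr; last by rewrite mulr_gt0.
    move=> h; clear -h; nra.
  have tj0 : 0 <= t ^+ j by rewrite exprn_ge0.
  have hb2 : t ^+ j * (t * sig / rho ^+ j.+1) <= t ^+ j * (`|A| / 2).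
    exact: ler_wpM2l.
  set hv := q t ord0 m0 - p ord0 m0.
  have eqX : hv - (hv - A * t ^+ j) = A * t ^+ j by rewrite opprB addrC subrK.
  have tri := ler_normB hv (hv - A * t ^+ j); rewrite eqX in tri.
  have h4 : `|A * t ^+ j| = 2 * (t ^+ j * (`|A| / 2)).
    by rewrite normrM (ger0_norm tj0); field.
  move=> h; rewrite mulrC; exact: (lowb_aux h hb2 tri h4).
have j0 : j%:R != 0 :> R by rewrite pnatr_eq0 -lt0n.
have hpowt : forall t : R, 0 <= t ->
    powR (t ^+ j) ((2 * k + 2)%:R / j%:R) = t ^+ (2 * k).+2.
  move=> t t0; rewrite -[t ^+ j]powR_mulrn // -powRrM [j%:R * _]mulrC divfK //.
  by rewrite powR_mulrn // addn2.
have s0 : 0 <= (2 * k + 2)%:R / j%:R :> R by rewrite divr_ge0.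
pose P := powR (`|A| / 2) ((2 * k + 2)%:R / j%:R).
have P0 : 0 < P by rewrite /P powR_gt0 // divr_gt0.
pose C := S / rho ^+ (2 * k).+2.
have C0 : 0 <= C by rewrite /C divr_ge0 // exprn_ge0 // ltW.
exists q; split; first exact: htraj.
exists (C / P + 1), tau1; split; first by apply: pos_add1; rewrite divr_ge0 // ltW.
split; first exact: tau10.
move=> t /andP[t0 tt].
have ht : `|t| <= rho by rewrite ger0_norm //; exact: le_trans tt tau1r.
have hE1 : E (q t) - E p <= C * t ^+ (2 * k).+2.
  apply: le_trans (ler_norm _) _; apply: le_trans (tailE' t ht) _.
  rewrite ger0_norm // (_ : (t / rho) ^+ (2 * k).+2 * S = C * t ^+ (2 * k).+2) //.
  by rewrite /C expr_div_n; field; rewrite expf_neq0 // gt_eqF.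
have hpow : P * t ^+ (2 * k).+2 <= powR (enorm (q t - p)) ((2 * k + 2)%:R / j%:R).
  rewrite -(hpowt t t0) /P -powRM; last exact: exprn_ge0.
    apply: (ge0_ler_powR s0); rewrite ?nnegrE.
    - by rewrite mulr_ge0 ?exprn_ge0 // divr_ge0.
    - exact: sqrtr_ge0.
    - by apply: hlowb; rewrite t0 tt.
  by rewrite divr_ge0.
have Y0 := powR_ge0 (enorm (q t - p)) ((2 * k + 2)%:R / j%:R).
apply: le_trans hE1 _.
rewrite (_ : C * t ^+ (2 * k).+2 = C / P * (P * t ^+ (2 * k).+2)); last first.
  by field; rewrite gt_eqF.
rewrite mulrDl mul1r; apply: le_trans (_ : C / P * powR (enorm (q t - p)) ((2 * k + 2)%:R / j%:R) <= _).
  by apply: ler_wpM2l => //; rewrite divr_ge0 // ltW.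
by rewrite lerDl.
Qed.
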